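(* Let $X$ be a connected weighted bipartite graph with vertex $u$. If $\theta\in\Phi_{\mathbf e_u}\setminus\{0\}$, then $(E_\theta)_{u,u}\le \frac12$. If additionally $0\in\Phi_{\mathbf e_u}$, then $(E_\theta)_{u,u}<\frac12$.
   Context: Graphs are simple, connected, undirected, with nonzero real edge weights; $A=A(X)$ is the weighted adjacency matrix with spectral decomposition $A=\sum_\lambda \lambda E_\lambda$ over its distinct eigenvalues, $E_\lambda$ being the orthogonal projection onto the $\lambda$-eigenspace. The eigenvalue support of $u$ is $\Phi_{\mathbf e_u}=\{\lambda: E_\lambda\mathbf e_u\ne 0\}$. *)

(* Defs.v *)
From HB Require Import structures.
From mathcomp Require Import all_boot all_order all_algebra.
Set Implicit Arguments. Unset Strict Implicit. Unset Printing Implicit Defensive.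
Import Order.TTheory GRing.Theory Num.Theory.
Local Open Scope ring_scope.

(* A weighted graph on vertex set 'I_n is given by its weighted adjacency
   matrix A : entries A i j != 0 are exactly the edges (with weight A i j). *)
Definition adj_rel (R : numFieldType) n (A : 'M[R]_n) : rel 'I_n :=
  fun i j => A i j != 0.

Definition simple_weighted_graph (R : numFieldType) n (A : 'M[R]_n) : Prop :=
  A^T = A /\ (forall i, A i i = 0).

Definition connected_graph (R : numFieldType) n (A : 'M[R]_n) : Prop :=
  forall i j : 'I_n, connect (adj_rel A) i j.

Definition bipartite_graph (R : numFieldType) n (A : 'M[R]_n) : Prop :=
  exists c : 'I_n -> bool, forall i j, A i j != 0 -> c i != c j.

Definition orth_proj_onto (R : numFieldType) n (W P : 'M[R]_n) : Prop :=
  P^T = P /\ P *m P = P /\ (P == W)%MS.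

Definition is_Eproj (R : numFieldType) n (A : 'M[R]_n) (lambda : R)
  (P : 'M[R]_n) : Prop := orth_proj_onto (eigenspace A lambda) P.

(* lambda is in the eigenvalue support Phi_{e_u}: E_lambda e_u <> 0 *)
Definition in_eig_support (R : numFieldType) n (A : 'M[R]_n) (u : 'I_n)
  (lambda : R) : Prop :=
  exists P, is_Eproj A lambda P /\ P *m delta_mx u 0 != (0 : 'cV[R]_n).

(* Main.v *)
Require Import Defs.
From HB Require Import structures.
From mathcomp Require Import all_boot all_order all_algebra.
From mathcomp Require Import lra.
Import Order.TTheory GRing.Theory Num.Theory.
Local Open Scope ring_scope.

Section Aux.
Variable R : rcfType.
Variable n : nat.
Implicit Types P Q A : 'M[R]_n.

Lemma proj_sum P u : P^T = P -> P *m P = P -> P u u = \sum_k P u k ^+ 2.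
Proof.
move=> PT PP; rewrite -{1}PP mxE; apply: eq_bigr => k _.
have -> : P k u = P u k by rewrite -{1}PT mxE.
by rewrite expr2.
Qed.

Lemma proj_ge P u : P^T = P -> P *m P = P -> P u u ^+ 2 <= P u u.
Proof.
move=> PT PP; rewrite [X in _ <= X](@proj_sum P u PT PP) (bigD1 u) //=.
by rewrite lerDl sumr_ge0 // => k _; rewrite sqr_ge0.
Qed.

Lemma proj_le1 P u : P^T = P -> P *m P = P -> P u u <= 1.
Proof. move=> PT PP; have := @proj_ge P u PT PP; rewrite expr2 => h; nra. Qed.

Lemma eig_mul A a P : is_Eproj A a P -> P *m A = a *: P.
Proof.
case=> _ [_ /andP[/sub_kermxP h _]].
by move: h; rewrite mulmxBr mul_mx_scalar => /eqP; rewrite subr_eq0 => /eqP.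
Qed.

Lemma orth A P Q a b : A^T = A -> Q^T = Q -> P *m A = a *: P -> Q *m A = b *: Q ->
  a != b -> P *m Q = 0.
Proof.
move=> AT QT hP hQ ab.
have h1 : P *m A *m Q^T = a *: (P *m Q^T) by rewrite hP scalemxAl.
have h2 : P *m (A *m Q^T) = b *: (P *m Q^T).
  by rewrite -{1}AT -trmx_mul hQ linearZ /= scalemxAr.
rewrite -QT; apply/eqP; move: h2; rewrite mulmxA h1 => /eqP.
rewrite -subr_eq0 -scalerBl scaler_eq0 subr_eq0 (negbTE ab) //.
Qed.

End Aux.
Arguments proj_le1 {R n P} u.
Arguments proj_sum {R n P} u.
Arguments eig_mul {R n A a P}.
Arguments orth {R n A P Q a b}.

Theorem proposition10 (R : rcfType) (n : nat) (A : 'M[R]_n) (u : 'I_n)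
    (theta : R) (Etheta : 'M[R]_n) :
  simple_weighted_graph A -> connected_graph A -> bipartite_graph A ->
  is_Eproj A theta Etheta ->
  in_eig_support A u theta -> theta != 0 ->
  Etheta u u <= 1 / 2 /\ (in_eig_support A u 0 -> Etheta u u < 1 / 2).
Proof.
move=> [AT _] _ [c hc] hE _ th0.
move: Etheta hE => P hE.
have [PT [PP _]] := hE.
have PA := eig_mul hE.
pose s := \row_i (if c i then 1 else -1 : R).
pose D := diag_mx s.
have ss : forall i, s 0 i * s 0 i = 1.
  by move=> i; rewrite mxE; case: (c i); rewrite ?mulr1 ?mulrNN ?mulr1.
have DD : D *m D = 1%:M.
  apply/matrixP => i j; rewrite mul_diag_mx !mxE.
  by case: eqP => [->|_]; case: (c _); rewrite ?mulr1n ?mulr0n ?mulr0 ?mulr1 ?mulrNN ?mul1r.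
have DT : D^T = D by rewrite /D tr_diag_mx.
have DAD : D *m A *m D = - A.
  apply/matrixP => i j; rewrite mul_mx_diag mul_diag_mx !mxE.
  have [/eqP Aij|Aij] := boolP (A i j == 0); first by rewrite Aij mulr0 mul0r oppr0.
  have := hc _ _ Aij.
  by case: (c i); case: (c j) => //= _; rewrite ?mulN1r ?mulr1 ?mul1r ?mulrN1 ?opprK.
have DA : D *m A = - (A *m D).
  by rewrite -[D *m A]mulmx1 -DD mulmxA DAD mulNmx.
pose Q := D *m P *m D.
have QT : Q^T = Q by rewrite /Q !trmx_mul DT PT mulmxA.
have QQ : Q *m Q = Q.
  by rewrite /Q !mulmxA -(mulmxA (D *m P) D D) DD mulmx1 -(mulmxA D P P) PP.
have QA : Q *m A = (- theta) *: Q.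
  rewrite /Q -mulmxA DA mulmxN mulmxA -(mulmxA D P A) PA -scalemxAr -scalemxAl.
  by rewrite scaleNr.
have tn : theta != - theta.
  by apply: contra th0 => /eqP h; apply/eqP; lra.
have PQ := orth AT QT PA QA tn.
have QP : Q *m P = 0 by rewrite -PT -QT -trmx_mul PQ trmx0.
have Quu : Q u u = P u u.
  by rewrite /Q mul_diag_mx mul_mx_diag !mxE; case: (c u); rewrite ?mulr1 ?mul1r ?mulrN1 ?mulN1r ?opprK.
clearbody Q.
have SS : (P + Q) *m (P + Q) = P + Q.
  by rewrite mulmxDl !mulmxDr PP QQ PQ QP addr0 add0r.
have ST : (P + Q)^T = P + Q by rewrite linearD /= PT QT.
have h1 := proj_le1 u ST SS.
rewrite mxE Quu in h1.
split; first lra.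
move=> [F [hF Fu]].
have [FT [FF _]] := hF.
have FA := eig_mul hF.
have PF := orth AT FT PA FA th0.
have QF : Q *m F = 0.
  apply: (orth AT FT QA FA); by rewrite oppr_eq0.
have FP : F *m P = 0 by rewrite -PT -FT -trmx_mul PF trmx0.
have FQ : F *m Q = 0 by rewrite -QT -FT -trmx_mul QF trmx0.
have ST3 : (P + Q + F)^T = P + Q + F by rewrite !linearD /= PT QT FT.
have SS3 : (P + Q + F) *m (P + Q + F) = P + Q + F.
  by rewrite !mulmxDl !mulmxDr PP QQ FF PQ QP PF QF FP FQ !addr0 !add0r.
have h3 := proj_le1 u ST3 SS3.
rewrite !mxE Quu in h3.
have Fpos : 0 < F u u.
  rewrite (proj_sum u FT FF).
  have [k Fk] : exists k, F u k != 0.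
    apply/existsP; apply: contraR Fu; rewrite negb_exists => /forallP h.
    apply/eqP/matrixP => i j; rewrite !mxE (ord1 j).
    rewrite (bigD1 u) //= big1 => [|k ku]; last by rewrite !mxE (negbTE ku) mulr0.
    have := h i; rewrite negbK -{1}FT mxE => /eqP ->.
    by rewrite mul0r add0r.
  rewrite (bigD1 k) //=; apply: ltr_wpDr; first by rewrite sumr_ge0 // => *; rewrite sqr_ge0.
  by rewrite lt_def sqrf_eq0 Fk sqr_ge0.
lra.
Qed.
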